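(* Let $G$ be a graph containing no cycle of length 6, let $x\in V(G)$, and let $A$ be a connected component of $G[N_2(x)]$. Then at least one of the following holds: (1) $|V(A)|=1$; (2) $|N(x)\cap N(V(A))|=1$; (3) $A$ is isomorphic to $K_{1,r}$ for some $r\ge 1$.
   Context: All graphs are finite, simple and undirected; ''containing no cycle of length 6'' means having no subgraph (not necessarily induced) isomorphic to $C_6$. $N_i(S)$ denotes the set of vertices at distance exactly $i$ from the vertex set $S$, $N(S)=N_1(S)$, $N(v)=N(\{v\})$, $N_2(v)=N_2(\{v\})$. *)

(* Defs.v *)
From mathcomp Require Import all_boot.
Set Implicit Arguments. Unset Strict Implicit. Unset Printing Implicit Defensive.

Definition simple_graph (T : finType) (e : rel T) : Prop :=
  symmetric e /\ irreflexive e.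

Definition has_C6 (T : finType) (e : rel T) : Prop :=
  exists f : 'I_6 -> T, injective f /\
    forall i : 'I_6, e (f i) (f (ordS i)).

Definition nbhd_set (T : finType) (e : rel T) (S : {set T}) : {set T} :=
  [set v | (v \notin S) && [exists u in S, e u v]].

Definition N2 (T : finType) (e : rel T) (x : T) : {set T} :=
  [set v | [&& v != x, ~~ e x v & [exists w, e x w && e w v]]].

Definition induced_rel (T : finType) (e : rel T) (S : {set T}) : rel T :=
  fun u v => [&& u \in S, v \in S & e u v].

Definition is_component (T : finType) (e : rel T) (S A : {set T}) : Prop :=
  exists2 a, a \in S & A = [set v in S | connect (induced_rel e S) a v].

Definition star_rel (r : nat) : rel 'I_r.+1 :=
  fun i j => ((i == ord0) && (j != ord0)) || ((j == ord0) && (i != ord0)).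

Definition induced_iso_star (T : finType) (e : rel T) (A : {set T}) (r : nat)
  : Prop :=
  exists f : 'I_r.+1 -> T,
    [/\ injective f, forall v, v \in A -> exists i, f i = v,
        forall i, f i \in A &
        forall i j, e (f i) (f j) = star_rel i j].

(* Main.v *)
Require Import Defs.
From mathcomp Require Import all_boot.
Set Implicit Arguments. Unset Strict Implicit. Unset Printing Implicit Defensive.
Lemma cyc6 (T : finType) (e : rel T) (a0 a1 a2 a3 a4 a5 : T) :
  uniq [:: a0; a1; a2; a3; a4; a5] -> e a0 a1 -> e a1 a2 -> e a2 a3 ->
  e a3 a4 -> e a4 a5 -> e a5 a0 -> has_C6 e.
Proof.
move=> Hu h01 h12 h23 h34 h45 h50.
exists (fun i : 'I_6 => nth a0 [:: a0; a1; a2; a3; a4; a5] i); split.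
  move=> i j /eqP; rewrite nth_uniq // => /eqP; exact: val_inj.
by case=> [[|[|[|[|[|[|?]]]]]] Hi].
Qed.

Lemma N2P (T : finType) (e : rel T) x v :
  v \in N2 e x -> [/\ v != x, ~~ e x v & exists w, e x w && e w v].
Proof. by rewrite inE => /and3P [a b /existsP c]. Qed.

Ltac neqs := rewrite /= ?inE ?negb_or;
  repeat (apply/andP; split); try done;
  try (apply/eqP => E; subst; by rewrite ?eqxx in * ).

Lemma L3 (T : finType) (e : rel T) x u0 u1 u2 w w' :
  simple_graph e -> ~ has_C6 e ->
  u0 \in N2 e x -> u1 \in N2 e x -> u2 \in N2 e x ->
  u0 != u2 -> e u0 u1 -> e u1 u2 -> e x w -> e w u0 -> e x w' -> e w' u2 ->
  w = w'.
Proof.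
move=> [sy ir] HC /N2P[n0 m0 _] /N2P[n1 m1 _] /N2P[n2 m2 _] d02 e01 e12 xw wu0 xw' wu2.
apply/eqP/negPn/negP => hne; apply: HC.
have d01 : u0 != u1 by apply/eqP=> E; rewrite E ir in e01.
have d12 : u1 != u2 by apply/eqP=> E; rewrite E ir in e12.
have dx : x != w by apply/eqP=> E; rewrite E ir in xw.
have dx' : x != w' by apply/eqP=> E; rewrite E ir in xw'.
have nv : forall v z, e x z -> ~~ e x v -> (z != v) && (v != z).
  move=> v z xz nxv; suff H : z != v by rewrite H eq_sym H.
  by apply/negP=> /eqP E; rewrite -E xz in nxv.
move: (nv _ _ xw m0) (nv _ _ xw m1) (nv _ _ xw m2) (nv _ _ xw' m0) (nv _ _ xw' m1) (nv _ _ xw' m2).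
move=> /andP[? ?] /andP[? ?] /andP[? ?] /andP[? ?] /andP[? ?] /andP[? ?].
apply: (@cyc6 _ e x w u0 u1 u2 w') => //; try by rewrite sy.
have ? : x != u0 by rewrite eq_sym.
have ? : x != u1 by rewrite eq_sym.
have ? : x != u2 by rewrite eq_sym.
rewrite /= !inE !negb_or; repeat (apply/andP; split); done.
Qed.

Lemma L4 (T : finType) (e : rel T) x u0 u1 u2 u3 w w' :
  simple_graph e -> ~ has_C6 e ->
  u0 \in N2 e x -> u1 \in N2 e x -> u2 \in N2 e x -> u3 \in N2 e x ->
  uniq [:: u0; u1; u2; u3] -> e u0 u1 -> e u1 u2 -> e u2 u3 ->
  e x w -> e w u0 -> e w u2 -> e x w' -> e w' u1 -> e w' u3 ->
  w = w'.
Proof.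
move=> [sy ir] HC /N2P[n0 m0 _] /N2P[n1 m1 _] /N2P[n2 m2 _] /N2P[n3 m3 _] Hu
  e01 e12 e23 xw wu0 wu2 xw' wu1 wu3.
apply/eqP/negPn/negP => hne; apply: HC.
have nv : forall v z, e x z -> ~~ e x v -> (z != v) && (v != z).
  move=> v z xz nxv; suff H : z != v by rewrite H eq_sym H.
  by apply/negP=> /eqP E; rewrite -E xz in nxv.
move: (nv _ _ xw m0) (nv _ _ xw m1) (nv _ _ xw m2) (nv _ _ xw m3).
move: (nv _ _ xw' m0) (nv _ _ xw' m1) (nv _ _ xw' m2) (nv _ _ xw' m3).
do 8 move=> /andP[? ?].
move: Hu; rewrite /= !inE !negb_or => /and4P[/and3P[? ? ?] /andP[? ?] ? _].
apply: (@cyc6 _ e w u0 u1 w' u3 u2) => //; try by rewrite sy.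
rewrite /= !inE !negb_or; repeat (apply/andP; split); try done; by rewrite eq_sym.
Qed.

Lemma K (T : finType) (e : rel T) x :
  simple_graph e -> ~ has_C6 e ->
  forall s v0, path (induced_rel e (N2 e x)) v0 s -> uniq (v0 :: s) ->
  2 <= size s -> forall w w', e x w -> e w v0 -> e x w' -> e w' (last v0 s) ->
  w = w'.
Proof.
move=> Hs HC s; have [n] := ubnP (size s); elim: n s => // n IH s Hn v0.
case: s Hn => [|v1 [|v2 t]] //= Hn /andP[/and3P[i0 i1 e01] /andP[/and3P[_ i2 e12] Hp]] Hu _ w w' xw wv0 xw' wl.
case: t Hn Hp Hu wl => [|v3 [|v4 t]] Hn Hp Hu wl.
- apply: (L3 Hs HC i0 i1 i2 _ e01 e12) => //.
  by move: Hu; rewrite /= !inE !negb_or => /and3P[/andP[_ ?] _ _].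
- move: Hp => /= /andP[/and3P[_ i3 e23] _].
  have [w2 /andP[xw2 w2v2]] : exists w2, e x w2 && e w2 v2 by case/N2P: i2.
  have [w1 /andP[xw1 w1v1]] : exists w1, e x w1 && e w1 v1 by case/N2P: i1.
  have Hu' := Hu.
  move: Hu; rewrite /= !inE !negb_or => /and4P[/and3P[? ? ?] /andP[? ?] ? _].
  have E1 : w = w2 by apply: (L3 Hs HC i0 i1 i2 _ e01 e12).
  have E2 : w1 = w' by apply: (L3 Hs HC i1 i2 i3 _ e12 e23).
  subst w2 w1.
  apply: (L4 Hs HC i0 i1 i2 i3 _ e01 e12 e23 xw wv0 w2v2 xw' w1v1 wl) => //.
- have [w2 /andP[xw2 w2v2]] : exists w2, e x w2 && e w2 v2 by case/N2P: i2.
  have E1 : w = w2.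
    apply: (L3 Hs HC i0 i1 i2 _ e01 e12) => //.
    by apply/negP=> /eqP E; move: Hu; rewrite E /= !inE eqxx !orbT.
  subst w2; apply: (IH (v3 :: v4 :: t) _ v2) => //.
  + move: Hn => /=; rewrite !ltnS => H; exact: (leq_ltn_trans (leqnSn _) H).
  + by move: Hu => /= /andP[_ /andP[_ ->]].
Qed.

Lemma star_of (T : finType) (e : rel T) (A : {set T}) c :
  simple_graph e -> c \in A -> 1 < #|A| ->
  (forall v, v \in A -> v != c -> e c v) ->
  (forall u v, u \in A -> v \in A -> u != c -> v != c -> ~~ e u v) ->
  exists2 r, 1 <= r & induced_iso_star e A r.
Proof.
move=> [sy ir] cA A2 H1 H2.
have cardA : #|A| = #|A :\ c|.+1 by rewrite (cardsD1 c A) cA.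
set L := enum (A :\ c).
have sL : size L = #|A :\ c| by rewrite /L -cardE.
have inL : forall k, k < #|A :\ c| -> nth c L k \in A :\ c.
  by move=> k Hk; rewrite -mem_enum; apply: mem_nth; rewrite sL.
exists #|A :\ c|; first by rewrite -ltnS -cardA.
exists (fun i : 'I_(#|A :\ c|).+1 => if val i is k.+1 then nth c L k else c).
split.
- move=> [[|i] Hi] [[|j] Hj] //= E; apply: val_inj => //=.
  + have := inL j Hj; rewrite -E !inE eqxx //.
  + have := inL i Hi; rewrite E !inE eqxx //.
  + congr (_.+1); apply/eqP; rewrite -(nth_uniq c _ _ (enum_uniq (mem (A :\ c)))).
    * exact/eqP.
    * by rewrite -/L sL.
    * by rewrite -/L sL.
- move=> v vA; have [->|vc] := eqVneq v c; first by exists ord0.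
  have vL : v \in L by rewrite mem_enum !inE vc.
  have Hk : (index v L).+1 < (#|A :\ c|).+1 by rewrite ltnS -sL index_mem.
  by exists (Ordinal Hk) => /=; rewrite nth_index.
- move=> [[|i] Hi] /=; first exact: cA.
  by have := inL i Hi; rewrite !inE => /andP[].
- move=> [[|i] Hi] [[|j] Hj]; rewrite /star_rel /=.
  + by rewrite ir.
  + have := inL j Hj; rewrite !inE => /andP[? ?]; rewrite H1 //.
  + have := inL i Hi; rewrite !inE => /andP[? ?]; rewrite sy H1 //.
  + have := inL i Hi; have := inL j Hj; rewrite !inE => /andP[? ?] /andP[? ?].
    by apply/negbTE/H2.
Qed.

Lemma sym_ind (T : finType) (e : rel T) S :
  simple_graph e -> symmetric (induced_rel e S).
Proof. by move=> [sy _] u v; rewrite /induced_rel sy andbCA. Qed.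

Lemma Close (T : finType) (e : rel T) x p q w w' :
  simple_graph e -> ~ has_C6 e ->
  connect (induced_rel e (N2 e x)) p q -> p != q -> ~~ e p q ->
  e x w -> e w p -> e x w' -> e w' q -> w = w'.
Proof.
move=> Hs HC /connectP[s Hp ->] pq npq xw wp xw' wq.
case: (shortenP Hp) pq npq wq => s' Hp' Hu' _.
case: s' Hp' Hu' => [|y [|z t]] //=; first by rewrite eqxx.
  by move=> /andP[/and3P[_ _ ->]].
move=> Hp' Hu' _ _ wq.
exact: (K Hs HC (s := y :: z :: t) (v0 := p) Hp' Hu' isT xw wp xw' wq).
Qed.

Theorem corollary2p6 (T : finType) (e : rel T) (x : T) (A : {set T}) :
  simple_graph e -> ~ has_C6 e ->
  is_component e (N2 e x) A ->
  [\/ #|A| = 1,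
      #|nbhd_set e [set x] :&: nbhd_set e A| = 1 |
      exists2 r, 1 <= r & induced_iso_star e A r].
Proof.
move=> Hs HC [a aN EA]; subst A.
have [sy ir] := Hs.
set r := induced_rel e (N2 e x).
set A := [set v in N2 e x | connect r a v].
have memA : forall v, (v \in A) = (v \in N2 e x) && connect r a v.
  by move=> v; rewrite /A in_set.
have inN : forall v, v \in A -> v \in N2 e x by move=> v; rewrite memA => /andP[].
have symr : connect_sym r := sym_connect_sym (sym_ind (N2 e x) Hs).
have conA : forall p q, p \in A -> q \in A -> connect r p q.
  move=> p q; rewrite !memA => /andP[_ ap] /andP[_ aq].
  by apply: connect_trans aq; rewrite symr.
have stepA : forall u v, u \in A -> r u v -> v \in A.
  move=> u v; rewrite memA => /andP[_ au] ruv.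
  rewrite memA (connect_trans au (connect1 ruv)) andbT.
  by case/and3P: ruv.
have aA : a \in A by rewrite memA aN connect0.
have nbr : forall v, v \in A -> exists w, e x w && e w v.
  by move=> v /inN /N2P[_ _].
have rE : forall u v, u \in A -> v \in A -> r u v = e u v.
  by move=> u v /inN uN /inN vN; rewrite /r /induced_rel uN vN.
have [A1|A1] := eqVneq #|A| 1; first by apply: Or31.
have A2 : 1 < #|A|.
  by rewrite ltn_neqAle eq_sym A1 /=; apply/card_gt0P; exists a.
set W := nbhd_set e [set x] :&: nbhd_set e A.
have inW : forall w, w \in W -> e x w /\ exists2 p, p \in A & e w p.
  move=> w; rewrite inE => /andP[]; rewrite !inE => /andP[_ /existsP[u /andP[]]].
  rewrite inE => /eqP -> xw /andP[_ /existsP[p /andP[pA pw]]].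
  by split => //; exists p => //; rewrite sy.
have [W1|W1] := eqVneq #|W| 1; first by apply: Or32.
have [w1 [w2 [w1W w2W w12]]] : exists w1 w2, [/\ w1 \in W, w2 \in W & w1 != w2].
  apply/card_gt1P; rewrite ltn_neqAle eq_sym W1 /=; apply/card_gt0P.
  have [w0 /andP[xw0 w0a]] := nbr a aA; exists w0.
  rewrite in_setI /nbhd_set !in_set; apply/andP; split; apply/andP; split.
  - by rewrite in_set1; apply/eqP=> E; rewrite E ir in xw0.
  - by apply/existsP; exists x; rewrite in_set1 eqxx xw0.
  - by rewrite xw0 andbF. 
  - by apply/existsP; exists a; rewrite aA sy w0a.
apply: Or33.
move: (inW _ w1W) (inW _ w2W) => [xw1 [p1 p1A w1p1]] [xw2 [p2 p2A w2p2]].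
have G : forall u y ws, u \in A -> y \in A -> e u y ->
    (forall w, e x w -> e w u -> w = ws) -> (forall w, e x w -> e w y -> w = ws) -> False.
  move=> u y ws uA yA uy Hu Hy.
  have [p [wp [pA xwp wpp nws]]] : exists p wp, [/\ p \in A, e x wp, e wp p & wp != ws].
    case: (eqVneq w1 ws) => [E|ne]; last by exists p1, w1.
    by exists p2, w2; split => //; rewrite -E eq_sym.
  have pu : p != u.
    by apply/eqP => E; subst p; rewrite (Hu wp xwp wpp) eqxx in nws.
  have py : p != y.
    by apply/eqP => E; subst p; rewrite (Hy wp xwp wpp) eqxx in nws.
  have epu : e p u.
    apply/negPn/negP => npu.
    have [wu /andP[xwu wuu]] := nbr u uA.
    have E := Close Hs HC (conA p u pA uA) pu npu xwp wpp xwu wuu.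
    by rewrite E (Hu wu xwu wuu) eqxx in nws.
  have [wy /andP[xwy wyy]] := nbr y yA.
  have E := L3 Hs HC (inN _ pA) (inN _ uA) (inN _ yA) py epu uy xwp wpp xwy wyy.
  by rewrite E (Hy wy xwy wyy) eqxx in nws.
have Hctr : exists c, [/\ c \in A, exists2 y, y \in A & e c y &
     forall y z, y \in A -> z \in A -> e c y -> e y z -> z = c].
  have [H3|no3] := boolP [exists c, [exists u0, [exists u2,
     [&& c \in A, u0 \in A, u2 \in A, e c u0, e c u2 & u0 != u2]]]].
    move: H3 => /existsP[c /existsP[u0 /existsP[u2 /and5P[cA u0A u2A cu0 /andP[cu2 u02]]]]].
    exists c; split => //; first by exists u0.
    move=> y z yA zA cy yz; apply/eqP/negPn/negP => zc.
    have [u [uA cu uy]] : exists u, [/\ u \in A, e c u & u != y].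
      case: (eqVneq u0 y) => [E|ne]; last by exists u0.
      by exists u2; split => //; rewrite -E eq_sym.
    have [wz /andP[xwz wzz]] := nbr z zA.
    have cz : c != z by rewrite eq_sym.
    have yz' : y != z by apply/eqP=> E; rewrite E ir in yz.
    have cy' : c != y by apply/eqP=> E; rewrite E ir in cy.
    have uc : u != c by apply/eqP=> E; rewrite E ir in cu.
    have Hc : forall w, e x w -> e w c -> w = wz := fun w xw wc =>
      L3 Hs HC (inN c cA) (inN y yA) (inN z zA) cz cy yz xw wc xwz wzz.
    case: (eqVneq z u) => [E|zu].
    + subst z.
      have yu : y != u by rewrite eq_sym.
      have yc : e y c by rewrite sy.
      have Hy : forall w, e x w -> e w y -> w = wz := fun w xw wy =>
        L3 Hs HC (inN y yA) (inN c cA) (inN u uA) yu yc cu xw wy xwz wzz.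
      exact: (G c y wz cA yA cy Hc Hy).
    + have Hu : forall w, e x w -> e w u -> w = wz.
        move=> w xw wu.
        apply: (K Hs HC (s := [:: c; y; z]) (v0 := u) _ _ isT xw wu xwz wzz).
        * have uc' : e u c by rewrite sy.
          by rewrite /= /r /induced_rel (inN u uA) (inN c cA) (inN y yA) (inN z zA) uc' cy yz.
        * rewrite /= !inE !negb_or uc uy (eq_sym u z) zu cy' cz yz' //.
      have uc' : e u c by rewrite sy.
      exact: (G u c wz uA cA uc' Hu Hc).
  have [b bA ba] : exists2 b, b \in A & b != a.
    have /card_gt1P [x1 [x2 [x1A x2A x12]]] := A2.
    case: (eqVneq x1 a) => [E|ne]; last by exists x1.
    by exists x2; rewrite // -E eq_sym.
  have [y yA ay] : exists2 y, y \in A & e a y.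
    have /connectP[s Hp Eb] := conA a b aA bA.
    case: (shortenP Hp) Eb => s' Hp' _ _ Eb.
    case: s' Hp' Eb => [|y t] /=; first by move=> _ E; rewrite E eqxx in ba.
    move=> /andP[ray _] _; have yA := stepA _ _ aA ray.
    by exists y => //; rewrite -rE.
  exists a; split => //; first by exists y.
  move=> y' z y'A zA ay' y'z; apply/eqP/negPn/negP => za.
  apply: (negP no3); apply/existsP; exists y'; apply/existsP; exists a; apply/existsP; exists z.
  by rewrite y'A aA zA sy ay' y'z eq_sym za.
have [c [cA [y0 y0A cy0] Hc]] := Hctr.
have H1 : forall v, v \in A -> v != c -> e c v.
  move=> v vA vc; have /connectP[s Hp Ev] := conA c v cA vA.
  case: (shortenP Hp) Ev => s' Hp' Hu' _ Ev.
  case: s' Hp' Hu' Ev => [|y [|z t]] /=.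
  - by move=> _ _ E; rewrite E eqxx in vc.
  - by move=> /andP[ry _] _ ->; rewrite -rE // (stepA _ _ cA ry).
  - move=> /andP[ry /andP[ryz _]] Hu' _.
    have yA := stepA _ _ cA ry; have zA := stepA _ _ yA ryz.
    have cy : e c y by rewrite -rE.
    have yz : e y z by rewrite -rE.
    have E := Hc y z yA zA cy yz.
    by move: Hu'; rewrite E !inE eqxx orbT.
have H2 : forall u v, u \in A -> v \in A -> u != c -> v != c -> ~~ e u v.
  move=> u v uA vA uc vc; apply/negP => uv.
  by rewrite (Hc u v uA vA (H1 u uA uc) uv) eqxx in vc.
exact: (star_of Hs cA A2 H1 H2).
Qed.
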